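(* Let $A$ be an abelian surface over $\mathbb{C}$ admitting two different principal polarizations $\theta \neq \theta' \in \mathrm{NS}(A)$. Then $A$ admits real multiplication.
   Context: An abelian surface $A$ over $\mathbb{C}$ admits real multiplication if the ring $\mathrm{End}_{\mathbb{Q}}(A) = \mathrm{End}(A) \otimes_{\mathbb{Z}} \mathbb{Q}$ contains a subring isomorphic to $\mathbb{Q}(\sqrt{d})$ for some integer $d \geq 2$ that is not a square. *)

(* Defs.v *)
From HB Require Import structures.
From mathcomp Require Import all_boot all_order all_algebra.
Set Implicit Arguments. Unset Strict Implicit. Unset Printing Implicit Defensive.
Import Order.TTheory GRing.Theory Num.Theory.
Local Open Scope ring_scope.

(* A complex 2-dimensional torus  V / Lambda  is modelled in lattice coordinates:
   Lambda = Z^4 (row vectors), V = Lambda (x) R = R^4, and the complex structure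
   of V (multiplication by i) is a real matrix J acting on row vectors, x |-> x *m J,
   with J^2 = -1.  R is an arbitrary real closed field (R = the real numbers is
   the case of the paper). *)

Definition complex_structure (R : rcfType) (J : 'M[R]_4) : Prop :=
  J *m J = - 1%:M.

Definition intmx (R : rcfType) (E : 'M[int]_4) : 'M[R]_4 := map_mx (fun z => z%:~R) E.
Definition ratmx (R : rcfType) (M : 'M[rat]_4) : 'M[R]_4 := map_mx (fun q => ratr q) M.

(* NS(A) (Appell-Humbert): integral alternating forms E(x,y) = x *m E *m y^T on
   Lambda which are invariant under the complex structure: E(xJ, yJ) = E(x, y). *)
Definition in_NS (R : rcfType) (J : 'M[R]_4) (E : 'M[int]_4) : Prop :=
  E^T = - E /\ J *m intmx R E *m J^T = intmx R E.

(* Polarization: the associated Hermitian form H(x,y) = E(ix,y) + i E(x,y) is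
   positive definite, i.e. E(xJ, x) > 0 for all nonzero real x. *)
Definition polarization (R : rcfType) (J : 'M[R]_4) (E : 'M[int]_4) : Prop :=
  in_NS J E /\
  forall x : 'rV[R]_4, x != 0 -> 0 < (x *m J *m intmx R E *m x^T) 0 0.

(* Principal polarization: the polarization has type (1,1), i.e. det E = 1. *)
Definition principal_polarization (R : rcfType) (J : 'M[R]_4) (E : 'M[int]_4) : Prop :=
  polarization J E /\ \det E = 1.

(* End_Q(A): rational matrices (endomorphisms of Lambda (x) Q) whose real
   extension is C-linear, i.e. commutes with J. *)
Definition in_EndQ (R : rcfType) (J : 'M[R]_4) (M : 'M[rat]_4) : Prop :=
  ratmx R M *m J = J *m ratmx R M.

(* Real multiplication: End_Q(A) contains a (unital) subring isomorphic to
   Q(sqrt d), d >= 2 not a square; such an embedding is the same as an element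
   M of End_Q(A) with M^2 = d (image of sqrt d). *)
Definition real_multiplication (R : rcfType) (J : 'M[R]_4) : Prop :=
  exists (d : nat) (M : 'M[rat]_4),
    (2 <= d)%N /\ (forall k : nat, (k * k)%N <> d) /\
    in_EndQ J M /\ M *m M = (d%:R)%:M.

(* Main.v *)
Require Import Defs.
From HB Require Import structures.
From mathcomp Require Import all_boot all_order all_algebra.
From mathcomp Require Import ring lra zify.
Set Implicit Arguments. Unset Strict Implicit. Unset Printing Implicit Defensive.
Import Order.TTheory GRing.Theory Num.Theory.
Local Open Scope ring_scope.

Section Gen.
Variable T : comRingType.
Definition mk (a b c d e f : T) : 'M[T]_4 :=
  \matrix_(i < 4, j < 4) nth 0 (nth [::] [:: [:: 0; a; b; c]; [:: -a; 0; d; e];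
     [:: -b; -d; 0; f]; [:: -c; -e; -f; 0]] i) j.
Definition en (X : 'M[T]_4) (i j : nat) := X (inord i) (inord j).
Definition dual (X : 'M[T]_4) :=
  mk (- en X 2 3) (en X 1 3) (- en X 1 2) (- en X 0 3) (en X 0 2) (- en X 0 1).
Definition pf (X : 'M[T]_4) := en X 0 1 * en X 2 3 - en X 0 2 * en X 1 3 + en X 0 3 * en X 1 2.
Definition pfb (X Y : 'M[T]_4) := en X 0 1 * en Y 2 3 + en Y 0 1 * en X 2 3
   - en X 0 2 * en Y 1 3 - en Y 0 2 * en X 1 3 + en X 0 3 * en Y 1 2 + en Y 0 3 * en X 1 2.
Definition isalt (X : 'M[T]_4) :=
  X = mk (en X 0 1) (en X 0 2) (en X 0 3) (en X 1 2) (en X 1 3) (en X 2 3).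

Lemma en_mk a b c d e f i j : (i < 4)%N -> (j < 4)%N -> en (mk a b c d e f) i j =
  nth 0 (nth [::] [:: [:: 0; a; b; c]; [:: -a; 0; d; e];
     [:: -b; -d; 0; f]; [:: -c; -e; -f; 0]] i) j.
Proof. by move=> hi hj; rewrite /en mxE !inordK. Qed.

Ltac crunch := apply/matrixP => -[[|[|[|[|i]]]] Hi] // [[|[|[|[|j]]]] Hj] //;
  rewrite !mxE ?big_ord_recl ?big_ord0 ?mxE /=; ring.

Lemma mk_dual1 a b c d e f : mk a b c d e f *m dual (mk a b c d e f) = (pf (mk a b c d e f))%:M.
Proof. rewrite /dual /pf !en_mk //=. crunch. Qed.
Lemma mk_dual2 a b c d e f : dual (mk a b c d e f) *m mk a b c d e f = (pf (mk a b c d e f))%:M.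
Proof. rewrite /dual /pf !en_mk //=. crunch. Qed.
Lemma mk_dualb1 a b c d e f a' b' c' d' e' f' :
  mk a b c d e f *m dual (mk a' b' c' d' e' f') + mk a' b' c' d' e' f' *m dual (mk a b c d e f)
  = (pfb (mk a b c d e f) (mk a' b' c' d' e' f'))%:M.
Proof. rewrite /dual /pfb !en_mk //=. crunch. Qed.
Lemma mk_dualb2 a b c d e f a' b' c' d' e' f' :
  dual (mk a b c d e f) *m mk a' b' c' d' e' f' + dual (mk a' b' c' d' e' f') *m mk a b c d e f
  = (pfb (mk a b c d e f) (mk a' b' c' d' e' f'))%:M.
Proof. rewrite /dual /pfb !en_mk //=. crunch. Qed.
Lemma mk_dual_dual a b c d e f : dual (dual (mk a b c d e f)) = mk a b c d e f.
Proof. rewrite /dual !en_mk //=. crunch. Qed.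
Lemma dualZ k A : dual (k *: A) = k *: dual A.
Proof. rewrite /dual /en. crunch. Qed.

Lemma dual1 X : isalt X -> X *m dual X = (pf X)%:M.
Proof. move=> ->; exact: mk_dual1. Qed.
Lemma dual2 X : isalt X -> dual X *m X = (pf X)%:M.
Proof. move=> ->; exact: mk_dual2. Qed.
Lemma dualb1 X Y : isalt X -> isalt Y -> X *m dual Y + Y *m dual X = (pfb X Y)%:M.
Proof. move=> -> ->; exact: mk_dualb1. Qed.
Lemma dualb2 X Y : isalt X -> isalt Y -> dual X *m Y + dual Y *m X = (pfb X Y)%:M.
Proof. move=> -> ->; exact: mk_dualb2. Qed.
Lemma dual_dual X : isalt X -> dual (dual X) = X.
Proof. by move=> hX; rewrite hX mk_dual_dual -hX. Qed.

Lemma quadrel X Y : isalt X -> isalt Y ->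
  (Y *m dual X) *m (Y *m dual X) = pfb X Y *: (Y *m dual X) - (pf X * pf Y)%:M.
Proof.
move=> hX hY.
have h : dual X *m Y = (pfb X Y)%:M - dual Y *m X.
  by rewrite -(dualb2 hX hY) addrK.
rewrite -mulmxA (mulmxA (dual X)) h mulmxBl mul_scalar_mx mulmxBr.
rewrite scalemxAr; congr (_ - _).
by rewrite !mulmxA (dual1 hY) mul_scalar_mx -scalemxAl (dual1 hX) scale_scalar_mx mulrC.
Qed.
Lemma quadN X Y : isalt X -> isalt Y ->
  (2%:R *: (Y *m dual X) - (pfb X Y)%:M) *m (2%:R *: (Y *m dual X) - (pfb X Y)%:M)
  = ((pfb X Y) ^+ 2 - 4%:R * (pf X * pf Y))%:M.
Proof.
move=> hX hY; have hq := quadrel hX hY; move: hq.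
set A := Y *m dual X => hq.
rewrite mulmxBl !mulmxBr -!scalemxAl -!scalemxAr hq !mul_mx_scalar !mul_scalar_mx.
apply/matrixP => i j; rewrite !mxE; ring.
Qed.
End Gen.

Section Map.
Variables (T T' : comRingType) (f : {rmorphism T -> T'}).
Lemma en_map X i j : en (map_mx f X) i j = f (en X i j).
Proof. by rewrite /en mxE. Qed.
Lemma isalt_map X : isalt X -> isalt (map_mx f X).
Proof.
move=> hX; rewrite /isalt !en_map {1}hX.
apply/matrixP => -[[|[|[|[|i]]]] Hi] // [[|[|[|[|j]]]] Hj] //;
  rewrite !mxE /= ?rmorph0 ?rmorphN //.
Qed.
Lemma dual_map X : dual (map_mx f X) = map_mx f (dual X).
Proof.
rewrite /dual !en_map.
apply/matrixP => -[[|[|[|[|i]]]] Hi] // [[|[|[|[|j]]]] Hj] //;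
  rewrite !mxE /= ?rmorph0 ?rmorphN ?opprK //.
Qed.
Lemma pf_map X : pf (map_mx f X) = f (pf X).
Proof. by rewrite /pf !en_map rmorphD rmorphB !rmorphM. Qed.
Lemma pfb_map X Y : pfb (map_mx f X) (map_mx f Y) = f (pfb X Y).
Proof. by rewrite /pfb !en_map !rmorphD !rmorphN !rmorphM. Qed.
End Map.

Section Pos.
Variables (R : rcfType) (K K' P : 'M[R]_4) (t c : R).
Hypotheses (hK : K^T = K) (hK' : K'^T = K') (hPK : P *m K = K')
  (hPP : P *m P = t *: P - c%:M)
  (pos : forall x : 'rV_4, x != 0 -> 0 < (x *m K *m x^T) 0 0)
  (pos' : forall x : 'rV_4, x != 0 -> 0 < (x *m K' *m x^T) 0 0)
  (nsc : forall l, P <> l%:M).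

Definition B (u v : 'rV[R]_4) := (u *m K *m v^T) 0 0.

Lemma BDl u v w : B (u + v) w = B u w + B v w.
Proof. by rewrite /B !mulmxDl mxE. Qed.
Lemma BNl u w : B (- u) w = - B u w.
Proof. by rewrite /B !mulNmx mxE. Qed.
Lemma BZl a u w : B (a *: u) w = a * B u w.
Proof. by rewrite /B -!scalemxAl mxE. Qed.
Lemma Bsym u v : B u v = B v u.
Proof.
rewrite /B; transitivity ((u *m K *m v^T)^T 0 0); first by rewrite [RHS]mxE.
by rewrite !trmx_mul trmxK hK mulmxA.
Qed.
Lemma BDr u v w : B w (u + v) = B w u + B w v.
Proof. by rewrite !(Bsym w) BDl. Qed.
Lemma BNr u w : B w (- u) = - B w u.
Proof. by rewrite !(Bsym w) BNl. Qed.
Lemma BZr a u w : B w (a *: u) = a * B w u.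
Proof. by rewrite Bsym BZl Bsym. Qed.
Lemma hKP : K *m P^T = P *m K.
Proof. by rewrite -{1}hK -trmx_mul hPK hK'. Qed.
Lemma BP u v : B (u *m P) v = B u (v *m P).
Proof. by rewrite /B trmx_mul mulmxA -(mulmxA u K) hKP mulmxA. Qed.
Lemma B'E u : (u *m K' *m u^T) 0 0 = B (u *m P) u.
Proof. by rewrite /B -hPK !mulmxA. Qed.
Lemma PP (x : 'rV[R]_4) : x *m P *m P = t *: (x *m P) - c *: x.
Proof. by rewrite -mulmxA hPP mulmxBr -scalemxAr mul_mx_scalar. Qed.

Lemma ex_row l : exists x : 'rV[R]_4, x *m P != l *: x.
Proof.
have [h|h] := boolP [forall i : 'I_4, ('e_i : 'rV[R]_4) *m P == l *: 'e_i].
  exfalso; suff hP : P = l%:M by exact: nsc hP.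
  apply/row_matrixP => i /=.
  by rewrite !rowE (eqP (forallP h i)) mul_mx_scalar.
by move: h; rewrite negb_forall => /existsP [i hi]; exists 'e_i.
Qed.

Lemma key (s : R) : exists a m : R, [/\ 0 < a,
  0 < 4 * (t * m - c * a) - 4 * s * m + s ^+ 2 * a &
  0 < 2 * (2 * t - s) * (t * m - c * a) - s * (2 * t - s) * m - 4 * c * m + 2 * c * s * a].
Proof.
have [x hx] := ex_row (s / 2).
set y := x *m P.
have x0 : x != 0 by apply: contraNneq hx => ->; rewrite mul0mx scaler0.
pose u := 2 *: y - s *: x.
have u0 : u != 0.
  apply: contra hx; rewrite subr_eq0 => /eqP hu; apply/eqP; rewrite -/y.
  have -> : y = 2^-1 *: (2 *: y) by rewrite scalerA mulVf ?scale1r // pnatr_eq0.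
  by rewrite hu scalerA mulrC.
have hg : B y y = t * B x y - c * B x x.
  by rewrite /y BP PP BDr BNr !BZr.
exists (B x x), (B x y); split.
- exact: pos.
- have := pos u0; rewrite -/(B u u) /u.
  rewrite -/y; do 3!rewrite ?BDl ?BNl ?BZl ?BDr ?BNr ?BZr; rewrite hg (Bsym y x).
  move=> h; apply: (lt_le_trans h); rewrite le_eqVlt; apply/orP; left; apply/eqP; ring.
- have := pos' u0; rewrite B'E /u mulmxBl -!scalemxAl PP.
  rewrite -/y; do 3!rewrite ?BDl ?BNl ?BZl ?BDr ?BNr ?BZr; rewrite hg (Bsym y x).
  move=> h; apply: (lt_le_trans h); rewrite le_eqVlt; apply/orP; left; apply/eqP; ring.
Qed.

Lemma pos_core : 0 < c /\ 4 * c < t ^+ 2.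
Proof.
have hd : 4 * c < t ^+ 2.
  have [a [m [ha h1 _]]] := key t.
  have : 0 < (t ^+ 2 - 4 * c) * a.
    by apply: (lt_le_trans h1); rewrite le_eqVlt; apply/orP; left; apply/eqP; ring.
  by rewrite pmulr_lgt0 // subr_gt0.
split=> //.
set d := t ^+ 2 - 4 * c.
have d0 : 0 <= d by rewrite subr_ge0 ltW.
have hsig (sg : R) : sg ^+ 2 = d -> 0 < t + sg.
  move=> hs.
  have [a [m [ha h1 h2]]] := key (t - sg).
  have hc : c = (t ^+ 2 - sg ^+ 2) / 4.
    by rewrite hs /d; field.
  rewrite hc in h1 h2.
  have e : 2 * (2 * t - (t - sg)) * (t * m - (t ^+ 2 - sg ^+ 2) / 4 * a) -
     (t - sg) * (2 * t - (t - sg)) * m - 4 * ((t ^+ 2 - sg ^+ 2) / 4) * m +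
     2 * ((t ^+ 2 - sg ^+ 2) / 4) * (t - sg) * a =
     (t + sg) / 2 * (4 * (t * m - (t ^+ 2 - sg ^+ 2) / 4 * a) - 4 * (t - sg) * m +
       (t - sg) ^+ 2 * a) by field.
  rewrite e in h2.
  by move: h2; rewrite pmulr_lgt0 // pmulr_lgt0 // invr_gt0.
have hp := hsig (Num.sqrt d) (sqr_sqrtr d0).
have hm : 0 < t + - Num.sqrt d by apply: hsig; rewrite sqrrN sqr_sqrtr.
have : 0 < (t + Num.sqrt d) * (t + - Num.sqrt d) by apply: mulr_gt0.
have -> : (t + Num.sqrt d) * (t + - Num.sqrt d) = t ^+ 2 - Num.sqrt d ^+ 2 by ring.
by rewrite sqr_sqrtr // /d; lra.
Qed.
End Pos.

Lemma isalt_of_alt (X : 'M[int]_4) : X^T = -X -> isalt X.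
Proof.
move=> hX; have h i j : X j i = - X i j by move/matrixP: hX => /(_ i j); rewrite !mxE.
have oE k (Hk : (k < 4)%N) : Ordinal Hk = inord k by apply: val_inj; rewrite /= inordK.
have h0 i : X i i = 0 by have := h i i; lia.
rewrite /isalt; apply/matrixP => -[[|[|[|[|i]]]] Hi] // [[|[|[|[|j]]]] Hj] //;
  rewrite mxE /en /= !oE ?h0 // h.
Qed.

Lemma pf_unit (X : 'M[int]_4) : isalt X -> \det X = 1 -> pf X = 1 \/ pf X = -1.
Proof.
move=> hX hdet.
have hd : dual X = pf X *: \adj X.
  have hA : X *m \adj X = 1%:M by rewrite mul_mx_adj hdet.
  by rewrite -[dual X]mulmx1 -hA mulmxA (dual2 hX) mul_scalar_mx.
have hX2 : X = pf X *: dual (\adj X) by rewrite -dualZ -hd dual_dual.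
have := detZ (pf X) (dual (\adj X)); rewrite -hX2 hdet => h1.
have : pf X \is a GRing.unit.
  apply/unitrPr; exists (pf X ^+ 3 * \det (dual (\adj X))).
  by rewrite mulrA -exprS h1.
by case/orP => /eqP ->; [left|right].
Qed.

Lemma e0_neq0 (R : rcfType) : ('e_0 : 'rV[R]_4) != 0.
Proof. by apply/eqP => /matrixP /(_ 0 0); rewrite !mxE /= => /eqP; rewrite oner_eq0. Qed.

Unset Implicit Arguments.

Theorem lemma2 (R : rcfType) (J : 'M[R]_4) (theta theta' : 'M[int]_4) :
  complex_structure J ->
  principal_polarization J theta ->
  principal_polarization J theta' ->
  theta <> theta' ->
  real_multiplication J.
Proof.
move=> hJ [[[altE invE] posE] detE] [[[altE' invE'] posE'] detE'] neq.
have aE := isalt_of_alt altE; have aE' := isalt_of_alt altE'.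
have sq1 (X : 'M[int]_4) : isalt X -> \det X = 1 -> ((pf X)%:~R : R) ^+ 2 = 1.
  by move=> hX hd; case: (pf_unit hX hd) => ->; rewrite ?sqrrN expr1n.
have hp := sq1 _ aE detE; have hp' := sq1 _ aE' detE'.
move: posE posE' invE invE'.
have Eint (X : 'M[int]_4) : intmx R X = map_mx intr X by [].
rewrite !Eint.
set Er := map_mx intr theta; set Er' := map_mx intr theta'.
move=> posE posE' invE invE'.
have aEr : isalt Er := isalt_map intr aE.
have aEr' : isalt Er' := isalt_map intr aE'.
have pEr : pf Er = (pf theta)%:~R := pf_map intr theta.
have pEr' : pf Er' = (pf theta')%:~R := pf_map intr theta'.
have bEr : pfb Er Er' = (pfb theta theta')%:~R := pfb_map intr theta theta'.
set pr : R := (pf theta)%:~R in pEr hp *.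
set pr' : R := (pf theta')%:~R in pEr' hp' *.
set br : R := (pfb theta theta')%:~R in bEr *.
have hp2 : pr * pr = 1 by rewrite -expr2.
have detEr : \det Er = 1 by rewrite /Er det_map_mx detE rmorph1.
have detEr' : \det Er' = 1 by rewrite /Er' det_map_mx detE' rmorph1.
have altEr : Er^T = - Er by rewrite /Er map_trmx altE map_mxN.
have altEr' : Er'^T = - Er' by rewrite /Er' map_trmx altE' map_mxN.
move: hJ; rewrite /complex_structure => hJ.
set D := dual Er.
have hD1 : Er *m D = pr%:M by rewrite dual1 // pEr.
have hD2 : D *m Er = pr%:M by rewrite dual2 // pEr.
have hJT (X : 'M[R]_4) : J *m X *m J^T = X -> X *m J^T = - (J *m X).
  move=> h; have := congr1 (mulmx J) h; rewrite !mulmxA hJ !mulNmx mul1mx => <-.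
  by rewrite opprK.
have hDJ : J^T *m D = - (D *m J).
  have e1 := congr1 (fun M => D *m M *m D) (hJT _ invE); simpl in e1.
  rewrite mulmxA hD2 mul_scalar_mx -scalemxAl in e1.
  rewrite mulmxN mulNmx -!mulmxA hD1 mul_mx_scalar -scalemxAr in e1.
  have := congr1 (fun M => pr *: M) e1; simpl.
  by rewrite scalerN !scalerA hp2 !scale1r.
set psi := Er' *m D.
have hpsiJ : psi *m J = J *m psi.
  rewrite /psi -mulmxA -[D *m J]opprK -hDJ mulmxN mulmxA (hJT _ invE').
  by rewrite mulNmx opprK mulmxA.
set phi := pr *: psi.
have hphiJ : phi *m J = J *m phi by rewrite /phi -scalemxAl hpsiJ scalemxAr.
have hq : psi *m psi = br *: psi - (pr * pr')%:M.
  by rewrite /psi /D quadrel // pEr pEr' bEr.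
have hpp : phi *m phi = (pr * br) *: phi - (pr * pr')%:M.
  rewrite /phi -scalemxAl -scalemxAr hq [LHS]scalerA hp2 scale1r.
  by rewrite [in RHS]scalerA mulrAC hp2 mul1r.
have hphiE : phi *m Er = Er'.
  by rewrite /phi /psi -scalemxAl -mulmxA hD2 mul_mx_scalar scalerA hp2 scale1r.
have symK (X : 'M[R]_4) : X^T = - X -> J *m X *m J^T = X -> (J *m X)^T = J *m X.
  by move=> ha hi; rewrite trmx_mul ha mulNmx hJT // opprK.
have hK := symK _ altEr invE.
have hK' := symK _ altEr' invE'.
have hPK : phi *m (J *m Er) = J *m Er' by rewrite mulmxA hphiJ -mulmxA hphiE.
have pos (X : 'M[R]_4) : (forall x : 'rV_4, x != 0 -> 0 < (x *m J *m X *m x^T) 0 0) ->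
    forall x : 'rV_4, x != 0 -> 0 < (x *m (J *m X) *m x^T) 0 0.
  by move=> h x hx; rewrite mulmxA; apply: h.
have nsc : forall l, phi <> l%:M.
  move=> l hl.
  have hE' : Er' = l *: Er by rewrite -hphiE hl mul_scalar_mx.
  have l0 : 0 < l.
    have hq0 := posE _ (e0_neq0 R).
    have := posE' _ (e0_neq0 R); rewrite hE' -scalemxAr -scalemxAl mxE.
    move: hq0; set q := (_ 0 0); move=> hq0 hlq; nra.
  have l4 : l ^+ 4 = 1.
    by have := congr1 determinant hE'; rewrite detZ detEr detEr' mulr1.
  have l1 : l = 1.
    have e : (l - 1) * ((l + 1) * (l ^+ 2 + 1)) = l ^+ 4 - 1 by ring.
    rewrite l4 subrr in e.
    have h2 : 0 < (l + 1) * (l ^+ 2 + 1) by apply: mulr_gt0; nra.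
    by move/eqP: e; rewrite mulf_eq0 (gt_eqF h2) orbF subr_eq0 => /eqP.
  apply: neq; apply/matrixP => i j.
  move: hE'; rewrite l1 scale1r => /matrixP /(_ i j); rewrite /Er /Er' !mxE => /eqP.
  by rewrite eqr_int => /eqP ->.
have [c0 tc] := pos_core hK hK' hPK hpp (pos _ posE) (pos _ posE') nsc.
have hc : pr * pr' = 1.
  have : (pr * pr') ^+ 2 = 1 by rewrite exprMn hp hp' mulr1.
  move=> h2; nra.
have tb : 4 < br ^+ 2 by move: tc; rewrite hc exprMn hp mul1r mulr1.
have hcI : pf theta * pf theta' = 1.
  by apply/eqP; rewrite -(eqr_int R) rmorphM rmorph1 /= -/pr -/pr' hc.
have tbI : 4 < pfb theta theta' * pfb theta theta'.
  by rewrite -(ltr_int R) rmorphM /= -/br -expr2.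
have hn : (3 <= `|pfb theta theta'|)%N by nia.
move: tbI hn; set b := pfb theta theta'; move=> tbI hn.
exists (`|b| ^ 2 - 4)%N, (map_mx intr (2%:R *: (theta' *m dual theta) - b%:M)).
split; [|split; [|split]].
- nia.
- move=> k hk.
  have [hkn|hkn] := leqP `|b| k.
    have := leq_mul hkn hkn; nia.
  have := leq_mul (hkn : (k < `|b|)%N) (hkn : (k < `|b|)%N). nia.
- rewrite /in_EndQ.
  have -> : ratmx R (map_mx intr (2%:R *: (theta' *m dual theta) - b%:M)) =
     map_mx (intr : int -> R) (2%:R *: (theta' *m dual theta) - b%:M).
    by apply/matrixP => i j; rewrite !mxE ratr_int.
  rewrite map_mxB map_mxZ map_mxM -dual_map map_scalar_mx -/Er -/Er' -/D -/psi -/br.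
  by rewrite mulmxBl mulmxBr -scalemxAl -scalemxAr hpsiJ mul_scalar_mx mul_mx_scalar.
- rewrite -map_mxM quadN // hcI map_scalar_mx; congr (_%:M).
  have -> : ((`|b| ^ 2 - 4)%N%:R : rat) = ((`|b| ^ 2 - 4)%N%:Z)%:~R by [].
  congr (_%:~R); rewrite -/b mulr1 expr2; lia.
Qed.
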